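(* Let $f\in\mathbb R[x_1,\dots,x_n]$ be a circuit polynomial $f(x)=\sum_{j=0}^r f_{\alpha(j)}x^{\alpha(j)}+f_{\alpha^\star}x^{\alpha^\star}$ satisfying condition (C3). Then $r\in\{n-1,n\}$. If $r=n$, then $f$ is gem regular (i.e. $D(f)=\emptyset$). If $r=n-1$, then $f$ is gem irregular with $D(f)=\{\alpha^\star\}$, and $\{\alpha(0),\dots,\alpha(n-1)\}=\{2k_1e_1,\dots,2k_ne_n\}$ for some $k_i\in\mathbb N$.
   Context: A circuit polynomial is $f(x)=\sum_{j=0}^r f_{\alpha(j)}x^{\alpha(j)}+f_{\alpha^\star}x^{\alpha^\star}$ (with $f_{\alpha^\star}\ne0$) such that: $r\le n$; $\alpha(j)\in 2\mathbb N_0^n$ and $f_{\alpha(j)}>0$ for all $j$; the vertex set of the Newton polytope $\mathrm{conv}(A(f))$ is exactly $\{\alpha(0),\dots,\alpha(r)\}$ and these points are affinely independent; and $\alpha^\star=\sum_{j=0}^r\lambda_j\alpha(j)$ uniquely with all $\lambda_j>0$, $\sum_j\lambda_j=1$. Here $A(f)$ is the set of exponents with nonzero coefficient. $\mathrm{New}_\infty(f)=\mathrm{conv}(A(f)\cup\{0\})$, $V_0(f)$ is its vertex set, $V(f)=V_0(f)\setminus\{0\}$, $V^c(f)=A(f)\setminus V(f)$. Condition (C3): for every $i\in\{1,\dots,n\}$, $V(f)$ contains a vector $2k_ie_i$ with $k_i\in\mathbb N$. Let $\mathcal G(f)$ be the set of nonempty faces $G$ of $\mathrm{New}_\infty(f)$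 with $0\notin G$. An exponent $\alpha\in A(f)$ is gem degenerate if $\alpha\in V^c(f)\cap G$ for some $G\in\mathcal G(f)$; $D(f)$ is the set of gem degenerate exponents; $f$ is gem regular if $D(f)=\emptyset$ and gem irregular otherwise. *)

(* Defs.v *)
From HB Require Import structures.
From mathcomp Require Import all_boot all_order all_algebra.
Set Implicit Arguments. Unset Strict Implicit. Unset Printing Implicit Defensive.
Import Order.TTheory GRing.Theory Num.Theory.
Local Open Scope ring_scope.

Definition expo (n : nat) := {ffun 'I_n -> nat}.

(* A real polynomial in n variables is represented by its coefficient
   function: f a = coefficient of x^a. *)
Definition mpoly (R : realFieldType) (n : nat) := expo n -> R.

Definition pt (R : realFieldType) (n : nat) (a : expo n) : 'rV[R]_n :=
  \row_i ((a i)%:R).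

Definition dot (R : realFieldType) (n : nat) (c x : 'rV[R]_n) : R :=
  \sum_i c ord0 i * x ord0 i.

Definition conv (R : realFieldType) (n : nat) (P : 'rV[R]_n -> Prop)
    (x : 'rV[R]_n) : Prop :=
  exists (m : nat) (p : 'I_m -> 'rV[R]_n) (l : 'I_m -> R),
    (forall i, P (p i)) /\ (forall i, 0 <= l i) /\ \sum_i l i = 1 /\
    x = \sum_i l i *: p i.

(* G is a face of the convex set Q (faces of polytopes are exposed faces;
   the empty face and Q itself are included). *)
Definition is_face (R : realFieldType) (n : nat) (Q G : 'rV[R]_n -> Prop) : Prop :=
  exists (c : 'rV[R]_n) (d : R),
    (forall x, Q x -> dot c x <= d) /\
    (forall x, G x <-> (Q x /\ dot c x = d)).

Definition is_vertex (R : realFieldType) (n : nat) (Q : 'rV[R]_n -> Prop)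
    (v : 'rV[R]_n) : Prop :=
  is_face Q (fun x => x = v).

Definition Apts (R : realFieldType) (n : nat) (f : mpoly R n) (x : 'rV[R]_n) : Prop :=
  exists a, f a != 0 /\ x = pt R a.

Definition is_circuit (R : realFieldType) (n r : nat) (f : mpoly R n)
    (al : 'I_r.+1 -> expo n) (ast : expo n) : Prop :=
  (r <= n)%N /\
  (forall j, (forall i, ~~ odd (al j i)) /\ 0 < f (al j)) /\
  f ast != 0 /\
  (forall j, ast != al j) /\
  (* f = sum_j f_{alpha(j)} x^{alpha(j)} + f_{alpha*} x^{alpha*}, i.e. A(f) *)
  (forall a, f a != 0 <-> (a = ast \/ exists j, a = al j)) /\
  (forall x, is_vertex (conv (Apts f)) x <-> exists j, x = pt R (al j)) /\
  (forall mu : 'I_r.+1 -> R, \sum_j mu j = 0 ->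
     \sum_j mu j *: pt R (al j) = 0 -> forall j, mu j = 0) /\
  (exists lam : 'I_r.+1 -> R,
     (forall j, 0 < lam j) /\ \sum_j lam j = 1 /\
     pt R ast = \sum_j lam j *: pt R (al j) /\
     (forall lam' : 'I_r.+1 -> R, \sum_j lam' j = 1 ->
        pt R ast = \sum_j lam' j *: pt R (al j) -> lam' = lam)).

Definition Newinf (R : realFieldType) (n : nat) (f : mpoly R n) : 'rV[R]_n -> Prop :=
  conv (fun x => Apts f x \/ x = 0).

Definition inV (R : realFieldType) (n : nat) (f : mpoly R n) (a : expo n) : Prop :=
  is_vertex (Newinf f) (pt R a) /\ pt R a != 0.

Definition inVc (R : realFieldType) (n : nat) (f : mpoly R n) (a : expo n) : Prop :=
  f a != 0 /\ ~ inV f a.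

Definition unit_expo (n : nat) (m : nat) (i : 'I_n) : expo n :=
  [ffun j => if j == i then m else 0%N].

Definition C3 (R : realFieldType) (n : nat) (f : mpoly R n) : Prop :=
  forall i : 'I_n, exists k : nat, (0 < k)%N /\ inV f (unit_expo (2 * k) i).

Definition in_calG (R : realFieldType) (n : nat) (f : mpoly R n)
    (G : 'rV[R]_n -> Prop) : Prop :=
  is_face (Newinf f) G /\ (exists x, G x) /\ ~ G 0.

Definition gem_degenerate (R : realFieldType) (n : nat) (f : mpoly R n)
    (a : expo n) : Prop :=
  inVc f a /\ exists G, in_calG f G /\ G (pt R a).

Definition gem_regular (R : realFieldType) (n : nat) (f : mpoly R n) : Prop :=
  forall a, ~ gem_degenerate f a.

(* Main.v *)
Require Import Defs.
From HB Require Import structures.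
From mathcomp Require Import all_boot all_order all_algebra.
From mathcomp Require Import zify.
Import Order.TTheory GRing.Theory Num.Theory.
Local Open Scope ring_scope.

Lemma dot_sum (R : realFieldType) n m (c : 'rV[R]_n) (l : 'I_m -> R)
  (p : 'I_m -> 'rV[R]_n) :
  dot c (\sum_i l i *: p i) = \sum_i l i * dot c (p i).
Proof.
rewrite /dot; under eq_bigr => k _ do rewrite summxE mulr_sumr.
rewrite exchange_big; apply: eq_bigr => i _; rewrite mulr_sumr.
by apply: eq_bigr => k _; rewrite mxE mulrCA.
Qed.

Lemma dot0 (R : realFieldType) n (c : 'rV[R]_n) : dot c 0 = 0.
Proof. by rewrite /dot big1 // => i _; rewrite mxE mulr0. Qed.

Lemma dot_unit (R : realFieldType) n (c : 'rV[R]_n) m i :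
  dot c (pt R (unit_expo m i)) = c ord0 i * m%:R.
Proof.
rewrite /dot (bigD1 i) //= !mxE ffunE eqxx big1 ?addr0 // => i' /negPf.
by rewrite mxE ffunE => ->; rewrite mulr0.
Qed.

Lemma dot_pt (R : realFieldType) n (c : 'rV[R]_n) a :
  dot c (pt R a) = \sum_i c ord0 i * (a i)%:R.
Proof. by apply: eq_bigr => i _; rewrite mxE. Qed.

Lemma conv1 (R : realFieldType) n (P : 'rV[R]_n -> Prop) x : P x -> conv P x.
Proof.
move=> Px; rewrite /conv; exists 1%N, (fun _ => x), (fun _ => 1).
split; first by move=> _. split; first by move=> _; exact: ler01.
by rewrite !big_ord1 scale1r; split.
Qed.
Arguments conv1 {R n P x}.

Lemma conv_le (R : realFieldType) n (P : 'rV[R]_n -> Prop) c d x :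
  (forall y, P y -> dot c y <= d) -> conv P x -> dot c x <= d.
Proof.
move=> H [m [p [l [Pp [l0 [l1 ->]]]]]]; rewrite dot_sum.
rewrite -[d]mul1r -l1 mulr_suml; apply: ler_sum => i _.
by apply: ler_wpM2l => //; exact: H.
Qed.
Arguments conv_le {R n P c d x}.

Lemma conv_eq (R : realFieldType) n m (P : 'rV[R]_n -> Prop) c d
  (l : 'I_m -> R) (p : 'I_m -> 'rV[R]_n) :
  (forall y, P y -> dot c y <= d) -> (forall i, P (p i)) ->
  (forall i, 0 <= l i) -> \sum_i l i = 1 ->
  dot c (\sum_i l i *: p i) = d -> forall i, 0 < l i -> dot c (p i) = d.
Proof.
move=> H Pp l0 l1; rewrite dot_sum => E.
have S : \sum_i l i * (d - dot c (p i)) = 0.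
  under eq_bigr => i _ do rewrite mulrBr.
  by rewrite sumrB -mulr_suml l1 mul1r E subrr.
move=> i li.
have nn : forall j, xpredT j -> 0 <= l j * (d - dot c (p j)).
  by move=> j _; apply: mulr_ge0 => //; rewrite subr_ge0; apply: H.
have := psumr_eq0P nn S (i:=i) isT.
move/eqP; rewrite mulf_eq0 (gt_eqF li) /= subr_eq0 => /eqP <-.
by [].
Qed.
Arguments conv_eq {R n m P c d l p}.

Lemma vertex_gen (R : realFieldType) n (P : 'rV[R]_n -> Prop) v :
  is_vertex (conv P) v -> P v.
Proof.
case=> c [d [Hle Hf]].
have [[m [p [l [Pp [l0 [l1 ev]]]]]] Hd] := (Hf v).1 erefl.
case: (pickP (fun i => 0 < l i)) => [i li|none]; last first.
  have : \sum_i l i = 0.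
    apply: big1 => i _; move: (l0 i) (none i).
    by rewrite le_eqVlt => /orP[/eqP<-|->].
  by rewrite l1 => /eqP; rewrite oner_eq0.
have E : dot c (p i) = d.
  apply: (conv_eq _ Pp l0 l1) => //; last by rewrite -ev.
  by move=> y Py; apply: Hle; apply: conv1.
by rewrite -((Hf (p i)).2 (conj (conv1 (Pp i)) E)).
Qed.
Arguments vertex_gen {R n P v}.

Lemma sum_deltaV (R : realFieldType) n m (j : 'I_m) (a : R) (v : 'I_m -> 'rV[R]_n) :
  \sum_j' (((j' == j)%:R * a) *: v j') = a *: v j.
Proof.
rewrite (bigD1 j) //= eqxx mul1r big1 ?addr0 // => j' /negPf ->.
by rewrite mul0r scale0r.
Qed.

Lemma sum_deltaS (R : realFieldType) m (j : 'I_m) (a : R) :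
  \sum_j' ((j' == j)%:R * a) = a.
Proof.
rewrite (bigD1 j) //= eqxx mul1r big1 ?addr0 // => j' /negPf ->.
by rewrite mul0r.
Qed.

Theorem mainTheorem5 (R : realFieldType) (n r : nat) (f : mpoly R n)
    (al : 'I_r.+1 -> expo n) (ast : expo n) :
  is_circuit f al ast -> C3 f ->
  (r.+1 = n \/ r = n) /\
  (r = n -> gem_regular f) /\
  (r.+1 = n ->
     ~ gem_regular f /\
     (forall a, gem_degenerate f a <-> a = ast) /\
     (exists k : 'I_n -> nat, (forall i, (0 < k i)%N) /\
        (forall a, (exists j, a = al j) <-> (exists i, a = unit_expo (2 * k i) i)))).
Proof.
move=> [rn [Hal [fast [astne [HA [Hvx [Haff [lam [lam0 [lam1 [ast_eq lamu]]]]]]]]]]] HC3.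
have ptI : forall a b : expo n, pt R a = pt R b -> a = b.
  move=> a b e; apply/ffunP => i; move/matrixP: e => /(_ ord0 i).
  by rewrite !mxE => /eqP; rewrite eqr_nat => /eqP.
have inN : forall a, f a != 0 -> Newinf f (pt R a).
  by move=> a fa; apply: conv1; left; exists a.
have N0 : Newinf f 0 by apply: conv1; right.
have alN : forall j, f (al j) != 0 by move=> j; rewrite gt_eqF // (Hal j).2.
have nvast : ~ is_vertex (Newinf f) (pt R ast).
  case=> c [d [Hle Hf]]; have [_ Hd] := (Hf _).1 (erefl (pt R ast)).
  have Hj : forall j, dot c (pt R (al j)) = d.
    move=> j; apply: (conv_eq Hle (fun j => inN _ (alN j)) _ lam1) => //.
      by move=> i; apply: ltW.
    by rewrite -ast_eq.
  have := (Hf (pt R (al ord0))).2 (conj (inN _ (alN ord0)) (Hj ord0)).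
  by move/ptI => e; move: (astne ord0); rewrite e eqxx.
have step : forall i : 'I_n, exists kj : nat * 'I_r.+1, (0 < kj.1)%N /\
    inV f (unit_expo (2 * kj.1) i) /\ al kj.2 = unit_expo (2 * kj.1) i.
  move=> i; have [k [k0 vx]] := HC3 i; have [vx' nz] := vx.
  have := vertex_gen vx'; case=> [[a [fa e]]|e]; last by rewrite e eqxx in nz.
  move/ptI: e => e; case: ((HA a).1 fa) => [ea|[j ej]].
    by exfalso; apply: nvast; rewrite -ea -e.
  by exists (k, j); split=> //; split=> //; rewrite /= -ej e.
have [g Hg] := fin_all_exists step.
pose k i := (g i).1; pose s i := (g i).2.
have k0 : forall i, (0 < k i)%N by move=> i; case: (Hg i).
have kV : forall i, inV f (unit_expo (2 * k i) i) by move=> i; case: (Hg i) => _ [].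
have ks : forall i, al (s i) = unit_expo (2 * k i) i by move=> i; case: (Hg i) => _ [].
have sinj : injective s.
  move=> i i' e; case: (eqVneq i i') => [//|ne]; exfalso.
  have := congr1 (fun a : expo n => a i) (etrans (esym (ks i)) (etrans (congr1 al e) (ks i'))).
  rewrite /= !ffunE eqxx (negbTE ne) => /eqP; rewrite muln_eq0 /=.
  by rewrite (gtn_eqF (k0 i)).
have nr : (n <= r.+1)%N by have := leq_card s sinj; rewrite !card_ord.
have knz : forall i, (2 * k i)%:R != 0 :> R.
  by move=> i; rewrite pnatr_eq0 muln_eq0 /= (gtn_eqF (k0 i)).
have AD : forall j, (forall i, s i != j) ->
    \sum_i ((al j i)%:R / (2 * k i)%:R) != 1 :> R.
  move=> j nj; apply/negP => /eqP s1.
  pose t i := (al j i)%:R / (2 * k i)%:R :> R.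
  pose mu := fun j' : 'I_r.+1 => (j' == j)%:R - \sum_i t i * (j' == s i)%:R :> R.
  suff : mu j = 0.
    rewrite /mu eqxx big1 ?subr0 => [/eqP|i _]; first by rewrite oner_eq0.
    by rewrite eq_sym (negbTE (nj i)) mulr0.
  apply: Haff.
    rewrite sumrB; under eq_bigr => j' _ do rewrite -[(_ == j)%:R]mulr1.
    rewrite sum_deltaS exchange_big /=.
    under [X in _ - X]eq_bigr => i _ do under eq_bigr => j' _ do rewrite mulrC.
    under [X in _ - X]eq_bigr => i _ do rewrite sum_deltaS.
    by rewrite s1 subrr.
  under eq_bigr => j' _ do rewrite scalerBl.
  rewrite sumrB; under eq_bigr => j' _ do rewrite -[(_ == j)%:R]mulr1.
  rewrite sum_deltaV scale1r.
  under [X in _ - X]eq_bigr => j' _ do rewrite scaler_suml.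
  rewrite exchange_big /=.
  under [X in _ - X]eq_bigr => i _ do under eq_bigr => j' _ do rewrite mulrC.
  under [X in _ - X]eq_bigr => i _ do rewrite sum_deltaV.
  apply/eqP; rewrite subr_eq0; apply/eqP/matrixP => a b.
  rewrite (ord1 a) summxE mxE (bigD1 b) //= big1 ?addr0.
    by rewrite !mxE ks ffunE eqxx /t divfK.
  by move=> i /negPf ne; rewrite !mxE ks ffunE eq_sym ne mulr0.
split; first by lia.
pose c' := \row_i ((2 * k i)%:R)^-1 : 'rV[R]_n.
have c'u : forall i, dot c' (pt R (unit_expo (2 * k i) i)) = 1.
  by move=> i; rewrite dot_unit mxE mulVf.
have c'pt : forall a, dot c' (pt R a) = \sum_i ((a i)%:R / (2 * k i)%:R).
  by move=> a; rewrite dot_pt; apply: eq_bigr => i _; rewrite mxE mulrC.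
have gal : forall j, Apts f (pt R (al j)) \/ pt R (al j) = 0.
  by move=> j; left; exists (al j); split=> //; apply: alN.
split.
- move=> ern a [[fa nV] [G [[[c [d [Hle HG]]] [[x Gx] nG0]] Ga]]].
  have Gd : dot c (pt R a) = d := ((HG _).1 Ga).2.
  have d0 : 0 < d.
    have := Hle 0 N0; rewrite dot0 le_eqVlt => /orP[/eqP d0|//].
    exfalso; apply: nG0; apply: (proj2 (HG 0)); split; first exact: N0.
    by rewrite dot0.
  case: ((HA a).1 fa) => [ea|[j ej]].
  + have Hj : forall j, dot c (pt R (al j)) = d.
      move=> j; apply: (conv_eq Hle (fun j => inN _ (alN j)) _ lam1) => //.
        by move=> i; apply: ltW.
      by rewrite -ast_eq -ea.
    case: (pickP [pred j0 | j0 \notin codom s]) => [j0 /= Hj0|none]; last first.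
      have : (#|'I_r.+1| <= #|codom s|)%N.
        apply: subset_leq_card; apply/subsetP => y _.
        by have := none y; move/negbFE.
      by rewrite card_ord card_codom // card_ord; lia.
    have nj : forall i, s i != j0.
      by move=> i; apply: contraNneq Hj0 => <-; exact: codom_f.
    apply: (negP (AD j0 nj)); apply/eqP.
    have ci : forall i, c ord0 i = d / (2 * k i)%:R.
      by move=> i; rewrite -(Hj (s i)) ks dot_unit mulfK.
    have : d * \sum_i ((al j0 i)%:R / (2 * k i)%:R) = d * 1.
      rewrite mulr1 -{2}(Hj j0) dot_pt mulr_sumr; apply: eq_bigr => i _.
      by rewrite ci mulrAC -mulrA.
    by apply: mulfI; rewrite gt_eqF.
  + rewrite ej in nV Gd.
    case: (boolP [exists i, s i == j]) => [/existsP[i /eqP si]|].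
      by apply: nV; rewrite -si ks; apply: kV.
    move/existsPn => nj.
    have S1 : 1 < \sum_i ((al j i)%:R / (2 * k i)%:R) :> R.
      rewrite lt_neqAle eq_sym (AD j nj) /= -(ler_pMr _ d0) -{1}Gd dot_pt mulr_sumr.
      apply: ler_sum => i _.
      have -> : c ord0 i * (al j i)%:R =
          c ord0 i * (2 * k i)%:R * ((al j i)%:R / (2 * k i)%:R).
        by rewrite -mulrA (mulrC (2 * k i)%:R) divfK.
      apply: ler_wpM2r; first by rewrite divr_ge0 // ler0n.
      by rewrite -dot_unit -ks; apply: Hle; apply: inN.
    pose S := \sum_i ((al j i)%:R / (2 * k i)%:R) : R.
    have c'j : dot c' (pt R (al j)) = S by rewrite c'pt.
    have ptnz : pt R (al j) != 0.
      apply/eqP => e; move: Gd; rewrite e dot0 => d00.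
      by move: d0; rewrite -d00 ltxx.
    apply: nV; split=> //.
    have other : forall j', j' != j -> exists i, s i = j'.
      move=> j' nj'; case: (boolP [exists i, s i == j']) => [/existsP[i /eqP e]|/existsPn nj2].
        by exists i.
      exfalso.
      have : (#|codom s| <= #|[predD1 (predC1 j) & j']|)%N.
        apply: subset_leq_card; apply/subsetP => y /codomP[i ->].
        by rewrite !inE (nj i) (nj2 i).
      have := cardD1 j' (predC1 j); rewrite cardC1 card_ord inE nj' /= => E.
      rewrite card_codom // card_ord => H. have E2 : r = (1 + #|[predD1 (predC1 j) & j']|)%N := E. have H2 : (n <= #|[predD1 (predC1 j) & j']|)%N := H. lia.
    have vl : forall j', dot c' (pt R (al j')) <= S /\
        (j' != j -> dot c' (pt R (al j')) < S).
      move=> j'; case: (eqVneq j' j) => [->|ne].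
        by rewrite c'j lexx; split=> //; rewrite eqxx.
      have [i <-] := other j' ne; rewrite ks c'u.
      by split=> [|_]; [apply: ltW|].
    have gen : forall y, (Apts f y \/ y = 0) -> dot c' y <= S.
      move=> y [[b [fb ->]]|->]; last by rewrite dot0; exact: le_trans ler01 (ltW S1).
      case: ((HA b).1 fb) => [->|[j' ->]]; last by case: (vl j').
      rewrite ast_eq dot_sum -[S]mul1r -lam1 mulr_suml; apply: ler_sum => j' _.
      by apply: ler_wpM2l; [apply: ltW | case: (vl j')].
    exists c', S; split; first by move=> y Ny; exact: conv_le gen Ny.
    move=> y; split=> [->|[Ny Ey]]; first by split; [apply: inN|].
    move: Ny => [m [p [l [Pp [l0 [l1 ey]]]]]].
    rewrite ey in Ey.
    have pe : forall i, 0 < l i -> p i = pt R (al j).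
      move=> i li; have Ei := conv_eq gen Pp l0 l1 Ey i li.
      case: (Pp i) Ei => [[b [fb ->]]|->]; last first.
        by rewrite dot0 => e0; move: (lt_trans ltr01 S1); rewrite -/S -e0 ltxx.
      case: ((HA b).1 fb) => [->|[j' ->]].
        move=> Ea; exfalso.
        case: (pickP (fun _ : 'I_n => true)) => [i0 _|none]; last first.
          move: S1; rewrite /S big1 ?ltr10 // => i' _.
          by have := none i'.
        have Ev := conv_eq gen gal (fun j => ltW (lam0 j)) lam1
          (etrans (congr1 _ (esym ast_eq)) Ea) (s i0) (lam0 (s i0)).
        by move: S1; rewrite -/S -Ev ks c'u ltxx.
      move=> Ej'; case: (eqVneq j' j) => [->//|ne].
      by have := (vl j').2 ne; rewrite Ej' ltxx.
    rewrite ey; transitivity (\sum_i l i *: pt R (al j)).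
      apply: eq_bigr => i _; move: (l0 i); rewrite le_eqVlt => /orP[/eqP<-|/pe->].
        by rewrite !scale0r.
      by [].
    by rewrite -scaler_suml l1 scale1r.
- move=> ern.
  have onto : forall j, exists i, s i = j.
    move=> j; have : j \in codom s.
      by apply: inj_card_onto => //; rewrite !card_ord ern.
    by case/codomP => i ->; exists i.
  have c'al : forall j, dot c' (pt R (al j)) = 1.
    by move=> j; have [i <-] := onto j; rewrite ks c'u.
  have c'ast : dot c' (pt R ast) = 1.
    by rewrite ast_eq dot_sum; under eq_bigr => j _ do rewrite c'al mulr1.
  have genle : forall y, (Apts f y \/ y = 0) -> dot c' y <= 1.
    move=> y [[b [fb ->]]|->]; last by rewrite dot0 ler01.
    by case: ((HA b).1 fb) => [->|[j ->]]; rewrite ?c'ast ?c'al.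
  have degast : gem_degenerate f ast.
    split.
      split=> //; case=> vx _; exact: nvast vx.
    exists (fun x => Newinf f x /\ dot c' x = 1); split; last first.
      by split; [apply: inN|].
    split.
      exists c', 1; split; first by move=> x Nx; exact: conv_le genle Nx.
      by move=> x; split.
    split; first by exists (pt R ast); split; [apply: inN|].
    by case=> _; rewrite dot0 => /eqP; rewrite eq_sym oner_eq0.
  split; first by move/(_ ast).
  split.
    move=> a; split=> [[[fa nV] _]|->//].
    case: ((HA a).1 fa) => [//|[j ej]]; exfalso; apply: nV.
    by have [i si] := onto j; rewrite ej -si ks; apply: kV.
  exists k; split=> // a; split=> [[j ->]|[i ->]].
    by have [i <-] := onto j; exists i; rewrite ks.
  by exists (s i); rewrite ks.
Qed.
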